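(* Let $R$ be an NJ-symmetric exchange ring. Then (1) $R$ is clean, and (2) $R$ is quasi-duo.
   Context: Rings are associative with identity. $N(R)$ is the set of nilpotent elements, $J(R)$ the Jacobson radical. $R$ is NJ-symmetric if for all $a,b,c\in R$, $abc\in N(R)$ implies $bac\in J(R)$. $R$ is clean if every element is a sum of an idempotent and a unit. $R$ is quasi-duo if every maximal left ideal and every maximal right ideal of $R$ is a two-sided ideal. *)

(* Defs.v *)
From HB Require Import structures.
From mathcomp Require Import all_boot all_algebra.
Set Implicit Arguments. Unset Strict Implicit. Unset Printing Implicit Defensive.
Import GRing.Theory.
Local Open Scope ring_scope.

Definition is_unit (R : pzRingType) (u : R) : Prop :=
  exists v : R, u * v = 1 /\ v * u = 1.

Definition idempotent (R : pzRingType) (e : R) : Prop := e * e = e.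

Definition nilpotent (R : pzRingType) (a : R) : Prop := exists n : nat, a ^+ n = 0.

Definition left_ideal (R : pzRingType) (I : R -> Prop) : Prop :=
  [/\ I 0, (forall x y, I x -> I y -> I (x + y)), (forall x, I x -> I (- x))
    & (forall r x, I x -> I (r * x))].

Definition right_ideal (R : pzRingType) (I : R -> Prop) : Prop :=
  [/\ I 0, (forall x y, I x -> I y -> I (x + y)), (forall x, I x -> I (- x))
    & (forall r x, I x -> I (x * r))].

Definition two_sided_ideal (R : pzRingType) (I : R -> Prop) : Prop :=
  left_ideal I /\ right_ideal I.

Definition maximal_left_ideal (R : pzRingType) (I : R -> Prop) : Prop :=
  [/\ left_ideal I, ~ I 1 &
      forall K : R -> Prop, left_ideal K -> (forall x, I x -> K x) -> ~ K 1 ->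
        forall x, K x -> I x].

Definition maximal_right_ideal (R : pzRingType) (I : R -> Prop) : Prop :=
  [/\ right_ideal I, ~ I 1 &
      forall K : R -> Prop, right_ideal K -> (forall x, I x -> K x) -> ~ K 1 ->
        forall x, K x -> I x].

Definition jacobson (R : pzRingType) (x : R) : Prop :=
  forall I : R -> Prop, maximal_left_ideal I -> I x.

Definition NJ_symmetric (R : pzRingType) : Prop :=
  forall a b c : R, nilpotent (a * b * c) -> jacobson (b * a * c).

(* Nicholson's characterization, used as the definition of exchange ring:
   for every a there is an idempotent e in aR with 1 - e in (1 - a)R. *)
Definition exchange_ring (R : pzRingType) : Prop :=
  forall a : R, exists e : R, idempotent e /\
    (exists r : R, e = a * r) /\ (exists s : R, 1 - e = (1 - a) * s).

Definition clean_ring (R : pzRingType) : Prop :=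
  forall x : R, exists e u : R, idempotent e /\ is_unit u /\ x = e + u.

Definition quasi_duo (R : pzRingType) : Prop :=
  (forall I : R -> Prop, maximal_left_ideal I -> two_sided_ideal I) /\
  (forall I : R -> Prop, maximal_right_ideal I -> two_sided_ideal I).

(* Main.v *)
Require Import Defs.
From mathcomp Require Import all_boot all_algebra.
From mathcomp Require Import boolp classical_sets.
Set Implicit Arguments. Unset Strict Implicit. Unset Printing Implicit Defensive.
Import GRing.Theory.
Local Open Scope ring_scope.

Lemma left_ideal_ext (R : pzRingType) (I I' : R -> Prop) :
  (forall x, I x <-> I' x) -> left_ideal I -> left_ideal I'.
Proof.
move=> E [h0 hD hN hM]; split.
- by apply/E.
- by move=> x y /E hx /E hy; apply/E; apply: hD.
- by move=> x /E hx; apply/E; apply: hN.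
- by move=> r x /E hx; apply/E; apply: hM.
Qed.

Lemma zorn_left (R : pzRingType) (K : R -> Prop) :
  left_ideal K -> ~ K 1 -> exists M, maximal_left_ideal M /\ (forall x, K x -> M x).
Proof.
move=> KI NK1.
pose P := fun B : set R => left_ideal (fun x => B x \/ K x) /\ ~ (B 1 \/ K 1).
have [|A [[AI A1] Amax]] := @Zorn_bigcup R P.
  move=> F FP Ftot.
  have lift : forall X z, F X -> X z \/ K z -> (\bigcup_(X in F) X)%classic z \/ K z.
    by move=> X z FX [Xz|Kz]; [left; exists X|right].
  split; last first.
    case=> [[X FX X1]|//].
    by have [_ /(_ (or_introl X1))] := FP X FX.
  case: KI => [k0 kD kN kM]; split.
  - by right.
  - move=> x y [[X FX Xx]|Kx] [[Y FY Yy]|Ky].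
    + have [XY|YX] := Ftot X Y FX FY.
      * have [[_ hD _ _] _] := FP Y FY.
        by apply: (lift Y) => //; apply: hD; left=> //; apply: XY.
      * have [[_ hD _ _] _] := FP X FX.
        by apply: (lift X) => //; apply: hD; left=> //; apply: YX.
    + have [[_ hD _ _] _] := FP X FX.
      by apply: (lift X) => //; apply: hD; [left|right].
    + have [[_ hD _ _] _] := FP Y FY.
      by apply: (lift Y) => //; apply: hD; [right|left].
    + by right; apply: kD.
  - move=> x [[X FX Xx]|Kx]; last by right; apply: kN.
    have [[_ _ hN _] _] := FP X FX.
    by apply: (lift X) => //; apply: hN; left.
  - move=> r x [[X FX Xx]|Kx]; last by right; apply: kM.
    have [[_ _ _ hM] _] := FP X FX.
    by apply: (lift X) => //; apply: hM; left.
exists (fun x => A x \/ K x); split; last by move=> x Kx; right.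
split=> // K' K'I MK' NK'1 x K'x.
apply: contrapT => NMx.
apply: (Amax K').
  split; first by move=> y Ay; apply: MK'; left.
  by move=> /(_ x K'x) Ax; apply: NMx; left.
split.
  apply: (left_ideal_ext _ K'I) => y; split; first by left.
  by case=> // Ky; apply: MK'; right.
by case=> // K1; apply: NK'1; apply: MK'; right.
Qed.
Lemma jac_add (R : pzRingType) (x y : R) : jacobson x -> jacobson y -> jacobson (x + y).
Proof. by move=> hx hy I hI; case: (hI) => [[_ hD _ _] _ _]; apply: hD; [apply: hx|apply: hy]. Qed.
Lemma jac_opp (R : pzRingType) (x : R) : jacobson x -> jacobson (- x).
Proof. by move=> hx I hI; case: (hI) => [[_ _ hN _] _ _]; apply: hN; apply: hx. Qed.
Lemma jac_sub (R : pzRingType) (x y : R) : jacobson x -> jacobson y -> jacobson (x - y).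
Proof. by move=> hx hy; apply: jac_add => //; apply: jac_opp. Qed.
Lemma jac_mull (R : pzRingType) (r x : R) : jacobson x -> jacobson (r * x).
Proof. by move=> hx I hI; case: (hI) => [[_ _ _ hM] _ _]; apply: hM; apply: hx. Qed.

Lemma nil_jac (R : pzRingType) (n : R) : NJ_symmetric R -> nilpotent n -> jacobson n.
Proof. by move=> NJ hn; have := NJ n 1 1; rewrite !mulr1 mul1r; apply. Qed.

Lemma sq0_jac (R : pzRingType) (n : R) : NJ_symmetric R -> n * n = 0 -> jacobson n.
Proof. by move=> NJ hn; apply: nil_jac => //; exists 2%N; rewrite expr2. Qed.

Lemma cross_jac (R : pzRingType) (f g x : R) : NJ_symmetric R -> g * f = 0 ->
  jacobson (f * x * g).
Proof.
move=> NJ gf; apply: sq0_jac => //.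
by rewrite -!mulrA (mulrA g) gf mul0r mulr0 mulr0.
Qed.

Lemma idem_facts (R : pzRingType) (e : R) : e * e = e ->
  [/\ e * (1 - e) = 0, (1 - e) * e = 0 & (1 - e) * (1 - e) = 1 - e].
Proof.
move=> ee; rewrite mulrBr mulrBl mulr1 mul1r ee subrr; split=> //.
by rewrite mulrBr mulr1 mulrBl mul1r ee subrr subr0.
Qed.

Lemma jac_linv (R : pzRingType) (j : R) : jacobson j -> exists r, r * (1 - j) = 1.
Proof.
move=> hj; apply: contrapT => H.
pose K := fun y : R => exists r, y = r * (1 - j).
have KI : left_ideal K.
  split.
  - by exists 0; rewrite mul0r.
  - by move=> x y [r ->] [r' ->]; exists (r + r'); rewrite mulrDl.
  - by move=> x [r ->]; exists (- r); rewrite mulNr.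
  - by move=> r0 x [r ->]; exists (r0 * r); rewrite mulrA.
have NK1 : ~ K 1 by case=> r h; apply: H; exists r; rewrite -h.
have [M [maxM KM]] := zorn_left KI NK1.
have hjM := hj M maxM.
have h1j : M (1 - j) by apply: KM; exists 1; rewrite mul1r.
case: maxM => [[_ hD _ _] N1 _]; apply: N1.
by have := hD _ _ h1j hjM; rewrite subrK.
Qed.

Lemma DF (R : pzRingType) (r y : R) : NJ_symmetric R -> r * y = 1 -> y * r = 1.
Proof.
move=> NJ ry.
pose g := 1 - y * r.
have rg : r * g = 0 by rewrite /g mulrBr mulr1 mulrA ry mul1r subrr.
have hg : jacobson g.
  have := NJ r g y; rewrite -(mulrA g) ry mulr1; apply.
  by exists 1%N; rewrite expr1 rg mul0r.
have gg : g * g = g.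
  rewrite {1}/g mulrBl mul1r; apply/eqP; rewrite subr_eq addrC -subr_eq subrr.
  by rewrite -mulrA rg mulr0.
have [w hw] := jac_linv hg.
have g0 : g = 0.
  by rewrite -[g]mul1r -hw -mulrA mulrBl mul1r gg subrr mulr0.
by apply/eqP; rewrite eq_sym -subr_eq0; apply/eqP.
Qed.

Lemma jac_unit (R : pzRingType) (j : R) : NJ_symmetric R -> jacobson j ->
  exists k, (1 + j) * k = 1 /\ k * (1 + j) = 1.
Proof.
move=> NJ hj; have [r hr] := jac_linv (jac_opp hj).
rewrite opprK in hr; exists r; split=> //; exact: DF hr.
Qed.

Lemma rinv_unit (R : pzRingType) (j w v : R) : NJ_symmetric R -> jacobson j ->
  w * v = 1 + j -> is_unit w.
Proof.
move=> NJ hj wv; have [k [hk1 hk2]] := jac_unit NJ hj.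
have h : w * (v * k) = 1 by rewrite mulrA wv.
by exists (v * k); split=> //; apply: DF.
Qed.

Lemma linv_unit (R : pzRingType) (j w v : R) : NJ_symmetric R -> jacobson j ->
  v * w = 1 + j -> is_unit w.
Proof.
move=> NJ hj vw; have [k [hk1 hk2]] := jac_unit NJ hj.
have h : (k * v) * w = 1 by rewrite -mulrA vw.
by exists (k * v); split=> //; apply: DF.
Qed.

Lemma clean_of (R : pzRingType) : NJ_symmetric R -> exchange_ring R -> clean_ring R.
Proof.
move=> NJ EX a; have [e [ee [[s es] [t et]]]] := EX a.
have {}ee : e * e = e := ee.
have [e1 e2 e3] := idem_facts ee.
exists (1 - e), (a - (1 - e)); split; first exact: e3.
split; last by rewrite addrC subrK.
set u := a - (1 - e).
have h1 : u * e = a * e by rewrite /u mulrBl e2 subr0.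
have h2 : u * (1 - e) = - ((1 - a) * (1 - e)).
  by rewrite /u mulrBl e3 mulrBl mul1r [RHS]opprB.
have h3 : a * e * (s * e) = e - a * ((1 - e) * s * e).
  rewrite mulrBl mul1r mulrBl mulrBr !mulrA -es ee.
  by rewrite opprB addrC subrK.
have h4 : (1 - a) * (1 - e) * (t * (1 - e)) = (1 - e) - (1 - a) * (e * t * (1 - e)).
  rewrite mulrBr mulr1 mulrBl (mulrA (1 - a) t) -et e3 !mulrA.
  done.
have hj : jacobson (- (a * ((1 - e) * s * e)) - (1 - a) * (e * t * (1 - e))).
  apply: jac_sub; first apply: jac_opp.
    by apply: jac_mull; apply: cross_jac.
  by apply: jac_mull; apply: cross_jac.
apply: (@rinv_unit R _ u (e * (s * e) - (1 - e) * (t * (1 - e))) NJ hj).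
rewrite mulrBr (mulrA u e) (mulrA u (1 - e)) h1 h2 mulNr opprK h3 h4.
by rewrite addrACA (addrC e) subrK.
Qed.

Lemma L_left (R : pzRingType) (M : R -> Prop) (x z f : R) : NJ_symmetric R ->
  maximal_left_ideal M -> M x -> M f -> f * f = f -> x * z + f = 1 -> False.
Proof.
move=> NJ maxM Mx Mf ff hxz.
case: (maxM) => [[h0 hD hN hM] N1 _].
have [f1 f2 f3] := idem_facts ff.
have xz : x * z = 1 - f by rewrite -hxz addrK.
have Mw : M ((1 - f) * x + f) by apply: hD => //; apply: hM.
have hj : jacobson ((1 - f) * x * f + f * z * (1 - f)).
  by apply: jac_add; apply: cross_jac.
have wv : ((1 - f) * x + f) * (z * (1 - f) + f) = 1 + ((1 - f) * x * f + f * z * (1 - f)).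
  rewrite mulrDl (mulrDr ((1 - f) * x)) (mulrDr f).
  have -> : (1 - f) * x * (z * (1 - f)) = 1 - f.
    by rewrite mulrA -(mulrA (1 - f) x z) xz f3 f3.
  by rewrite ff mulrA (addrC (f * z * (1 - f)) f) addrACA subrK.
have [w' [hw1 hw2]] := rinv_unit NJ hj wv.
by apply: N1; rewrite -hw2; apply: hM.
Qed.

Lemma L_right (R : pzRingType) (M : R -> Prop) (x z f : R) : NJ_symmetric R ->
  maximal_right_ideal M -> M x -> M f -> f * f = f -> z * x + f = 1 -> False.
Proof.
move=> NJ maxM Mx Mf ff hxz.
case: (maxM) => [[h0 hD hN hM] N1 _].
have [f1 f2 f3] := idem_facts ff.
have xz : z * x = 1 - f by rewrite -hxz addrK.
have Mw : M (x * (1 - f) + f) by apply: hD => //; apply: hM.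
have hj : jacobson ((1 - f) * z * f + f * x * (1 - f)).
  by apply: jac_add; apply: cross_jac.
have wv : ((1 - f) * z + f) * (x * (1 - f) + f) = 1 + ((1 - f) * z * f + f * x * (1 - f)).
  rewrite mulrDl (mulrDr ((1 - f) * z)) (mulrDr f).
  have -> : (1 - f) * z * (x * (1 - f)) = 1 - f.
    by rewrite mulrA -(mulrA (1 - f) z x) xz f3 f3.
  by rewrite ff mulrA (addrC (f * x * (1 - f)) f) addrACA subrK.
have [w' [hw1 hw2]] := linv_unit NJ hj wv.
by apply: N1; rewrite -hw1; apply: hM.
Qed.

Lemma max_left_gen (R : pzRingType) (M : R -> Prop) (y : R) :
  maximal_left_ideal M -> ~ M y -> exists m q, M m /\ 1 = m + q * y.
Proof.
move=> maxM NMy; case: (maxM) => [[h0 hD hN hM] N1 Mmax].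
pose K := fun z : R => exists m q, M m /\ z = m + q * y.
have KI : left_ideal K.
  split.
  - by exists 0, 0; rewrite mul0r addr0.
  - move=> a b [m [q [Mm ->]]] [m' [q' [Mm' ->]]].
    by exists (m + m'), (q + q'); split; [apply: hD|rewrite mulrDl addrACA].
  - move=> a [m [q [Mm ->]]].
    by exists (- m), (- q); split; [apply: hN|rewrite opprD mulNr].
  - move=> r a [m [q [Mm ->]]].
    by exists (r * m), (r * q); split; [apply: hM|rewrite mulrDr mulrA].
apply: contrapT => H.
apply: NMy; apply: (Mmax K KI).
- by move=> a Ma; exists a, 0; rewrite mul0r addr0.
- by move=> [m [q [Mm h]]]; apply: H; exists m, q.
- by exists 0, 1; rewrite mul1r add0r.
Qed.

Lemma max_right_gen (R : pzRingType) (M : R -> Prop) (y : R) :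
  maximal_right_ideal M -> ~ M y -> exists m q, M m /\ 1 = m + y * q.
Proof.
move=> maxM NMy; case: (maxM) => [[h0 hD hN hM] N1 Mmax].
pose K := fun z : R => exists m q, M m /\ z = m + y * q.
have KI : right_ideal K.
  split.
  - by exists 0, 0; rewrite mulr0 addr0.
  - move=> a b [m [q [Mm ->]]] [m' [q' [Mm' ->]]].
    by exists (m + m'), (q + q'); split; [apply: hD|rewrite mulrDr addrACA].
  - move=> a [m [q [Mm ->]]].
    by exists (- m), (- q); split; [apply: hN|rewrite opprD mulrN].
  - move=> r a [m [q [Mm ->]]].
    by exists (m * r), (q * r); split; [apply: hM|rewrite mulrDl mulrA].
apply: contrapT => H.
apply: NMy; apply: (Mmax K KI).
- by move=> a Ma; exists a, 0; rewrite mulr0 addr0.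
- by move=> [m [q [Mm h]]]; apply: H; exists m, q.
- by exists 0, 1; rewrite mulr1 add0r.
Qed.

Lemma dichot (R : pzRingType) (M : R -> Prop) (f : R) : NJ_symmetric R ->
  maximal_left_ideal M -> f * f = f -> ~ M f -> M (1 - f).
Proof.
move=> NJ maxM ff NMf.
have [m [q [Mm h1]]] := max_left_gen maxM NMf.
case: (maxM) => [[h0 hD hN hM] N1 _].
have [f1 f2 f3] := idem_facts ff.
have e1 : 1 - f = m * (1 - f).
  have := erefl ((m + q * f) * (1 - f)); rewrite {2}mulrDl -(mulrA q) f1 mulr0 addr0 -h1 mul1r; done.
have e2 : m * (1 - f) = (1 - f) * m * (1 - f) + f * m * (1 - f).
  by rewrite -!mulrDl subrK mul1r.
have e3 : (1 - f) * m * (1 - f) = (1 - f) * m - (1 - f) * m * f.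
  by rewrite mulrBr mulr1.
have J1 : jacobson ((1 - f) * m * f) by apply: cross_jac.
have J2 : jacobson (f * m * (1 - f)) by apply: cross_jac.
rewrite e1 e2 e3; apply: (hD); last exact: J2 M maxM.
apply: hD; first by apply: hM.
by apply: hN; exact: J1 M maxM.
Qed.

Lemma qd_left (R : pzRingType) (M : R -> Prop) : NJ_symmetric R -> exchange_ring R ->
  maximal_left_ideal M -> two_sided_ideal M.
Proof.
move=> NJ EX maxM; case: (maxM) => [[h0 hD hN hM] N1 _].
split; first by split.
split=> // r x Mx; apply: contrapT => Nxr.
have [m [q [Mm h1]]] := max_left_gen maxM Nxr.
have [e [ee [[s es] [t et]]]] := EX m.
have {}ee : e * e = e := ee.
have hm : 1 - m = q * (x * r) by rewrite h1 addrC addKr.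
have [Me|Me] := pselect (M e).
  apply: (@L_left R M (q * x) (r * t) e NJ maxM) => //; first by apply: hM.
  by rewrite mulrA -(mulrA q x r) -hm -et subrK.
have M1e := dichot NJ maxM ee Me.
have [_ _ f3] := idem_facts ee.
apply: (@L_left R M m s (1 - e) NJ maxM) => //.
by rewrite -es addrC subrK.
Qed.

Lemma qd_right (R : pzRingType) (M : R -> Prop) : NJ_symmetric R -> exchange_ring R ->
  maximal_right_ideal M -> two_sided_ideal M.
Proof.
move=> NJ EX maxM; case: (maxM) => [[h0 hD hN hM] N1 _].
split; last by split.
split=> // r x Mx; apply: contrapT => Nrx.
have [m [q [Mm h1]]] := max_right_gen maxM Nrx.
have [e [ee [[s es] [t et]]]] := EX m.
have {}ee : e * e = e := ee.
have hm : 1 - m = r * x * q by rewrite h1 addrC addKr.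
have Me : M e by rewrite es; apply: hM.
apply: (@L_right R M (x * (q * t)) r e NJ maxM) => //; first by apply: hM.
by rewrite !mulrA -hm -et subrK.
Qed.

Theorem proposition2p9 (R : pzRingType) :
  NJ_symmetric R -> exchange_ring R -> clean_ring R /\ quasi_duo R.
Proof.
move=> NJ EX; split; first exact: clean_of.
split=> I hI; [exact: qd_left | exact: qd_right].
Qed.
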